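(* Let $H$ be a finite group with a subgroup $H_{1}$ of index $u\ge 2$, let $V$ be an $\mathbb{F}H_{1}$-module of dimension $a$ over a field $\mathbb{F}$ of characteristic $p>0$, and let $U\le \mathrm{Sym}(u)$ be the image of the action of $H$ on the set of right cosets of $H_{1}$ in $H$. If $U\in\{\mathrm{Alt}(u),\mathrm{Sym}(u)\}$, then every $\mathbb{F}H$-submodule of the induced module $V\uparrow^{H}_{H_{1}}$ can be generated, as an $\mathbb{F}H$-module, by $2a$ elements. *)

(* Defs.v *)
From HB Require Import structures.
From mathcomp Require Import all_boot all_order all_algebra all_fingroup.
From mathcomp Require Import mxrepresentation.
Set Implicit Arguments. Unset Strict Implicit. Unset Printing Implicit Defensive.
Import GRing.Theory.
Local Open Scope ring_scope.
Local Open Scope group_scope.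

Section Induced.
Variables (F : fieldType) (gT : finGroupType) (H H1 : {group gT}) (a : nat).
Variable rV : mx_representation F H1 a.

Definition ind_trans : {set gT} := transversal (rcosets H1 H) H.
Definition ind_deg : nat := #|ind_trans|.
Definition ind_rep (i : 'I_ind_deg) : gT := enum_val i.

(* The induced module V^H_{H1} = (+)_i V (x) t_i is modelled by matrices
   M : 'M_(ind_deg, a), row i being the component in V (x) t_i.
   Right action of g: (v (x) t_i) g = v rV(t_i g t_j^-1) (x) t_j
   where t_j is the representative with H1 t_i g = H1 t_j. *)
Definition ind_act (g : gT) (M : 'M[F]_(ind_deg, a)) : 'M[F]_(ind_deg, a) :=
  \matrix_(j < ind_deg)
    (\sum_(i < ind_deg)
        (if (ind_rep i * g * (ind_rep j)^-1)%g \in H1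
         then row i M *m rV (ind_rep i * g * (ind_rep j)^-1)%g
         else 0))%R.

Definition ind_mx (g : gT) : 'M[F]_(ind_deg * a) := lin_mx (ind_act g).

Definition ind_submod m (W : 'M[F]_(m, ind_deg * a)) : Prop :=
  forall x, x \in H -> (W *m ind_mx x <= W)%MS.

Definition ind_gen k (v : 'I_k -> 'rV[F]_(ind_deg * a)) : 'M[F]_(ind_deg * a) :=
  (\sum_(i < k) \sum_(x in H) <<v i *m ind_mx x>>)%MS.

End Induced.

Section CosetAction.
Variables (gT : finGroupType) (H H1 : {group gT}).

Definition coset_perm_image : {set {perm {set gT}}} :=
  [set restr_perm (rcosets H1 H) (actperm 'Rs x) | x in H].

Definition coset_Sym : {set {perm {set gT}}} := Sym (rcosets H1 H).
Definition coset_Alt : {set {perm {set gT}}} :=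
  [set s in Sym (rcosets H1 H) | ~~ odd_perm s].
End CosetAction.

(* Main.v *)
Require Import Defs.
From HB Require Import structures.
From mathcomp Require Import all_boot all_order all_algebra all_fingroup.
From mathcomp Require Import mxrepresentation.
Set Implicit Arguments. Unset Strict Implicit. Unset Printing Implicit Defensive.
Import GRing.Theory.
Local Open Scope ring_scope.

Section LA.
Variables (F : fieldType) (N K : nat) (A : 'M[F]_N).
Hypotheses (K_gt0 : (0 < K)%N) (AK : A ^+ K = 1).

Definition cyc (w : 'rV[F]_N) : 'M_N := (\sum_(k < K) <<w *m A ^+ k>>)%MS.
Definition genS (s : seq 'rV[F]_N) : 'M_N := (\sum_(w <- s) cyc w)%MS.

Lemma cyc_pow w k : (w *m A ^+ k <= cyc w)%MS.
Proof.
rewrite (divn_eq k K) exprD mulnC exprM AK expr1n mul1r.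
apply: (sumsmx_sup (Ordinal (ltn_pmod k K_gt0))) => //.
by rewrite genmxE.
Qed.

Lemma cycA w : (cyc w *m A <= cyc w)%MS.
Proof.
rewrite {1}/cyc sumsmxMr.
apply/sumsmx_subP => k _; rewrite (eqmxMr _ (genmxE _)) -mulmxA.
by rewrite -[_ *m A]/(A ^+ k * A) -exprSr cyc_pow.
Qed.

Lemma powA m (W : 'M[F]_(m, N)) e : (W *m A <= W)%MS -> (W *m A ^+ e <= W)%MS.
Proof.
move=> WA; elim: e => [|e IH]; first by rewrite expr0 mulmx1.
by rewrite exprSr mulmxA; apply: submx_trans WA; apply: submxMr.
Qed.


Lemma step (M' : 'M[F]_N) (w : 'rV_N) m (W : 'M[F]_(m,N)) :
 (M' *m A <= M')%MS -> (W *m A <= W)%MS -> (W <= M' + cyc w)%MS ->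
 exists2 z : 'rV_N, (z <= W)%MS & (W <= (W :&: M') + cyc z)%MS.
Proof.
move=> MA WA WS.
pose S j : 'M_N := (M' + \sum_(k < j) <<w *m A ^+ k>>)%MS.
have S0 : (S 0 <= M')%MS by rewrite /S big_ord0 addsmx_sub submx_refl sub0mx.
have SS j : S j.+1 = (S j + <<w *m A ^+ j>>)%MS by rewrite /S big_ord_recr /= addsmxA.
have SA1 j : (S j *m A <= S j.+1)%MS.
  rewrite /S addsmxMr addsmx_sub; apply/andP; split.
    by apply: submx_trans MA _; apply: addsmxSl.
  rewrite sumsmxMr; apply/sumsmx_subP => k _; apply: submx_trans (addsmxSr _ _).
  apply: (sumsmx_sup (Ordinal (ltn_ord k : (k.+1 < j.+1)%N))) => //=.
  by rewrite (eqmxMr _ (genmxE _)) -mulmxA -[_ *m A]/(A ^+ k * A) -exprSr genmxE.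
have SA (j e : nat) : (S j *m A ^+ e <= S (j + e)%N)%MS.
  elim: e => [|e IH]; first by rewrite expr0 mulmx1 addn0.
  rewrite exprSr mulmxA addnS; apply: submx_trans (SA1 (j + e)%N).
  exact: submxMr.
have WK : (W <= S K)%MS by [].
case: (boolP (W <= M')%MS) => WM'.
  exists 0; first exact: sub0mx.
  by apply: submx_trans (addsmxSl _ _); rewrite sub_capmx submx_refl.
pose P j := ~~ (W :&: S j.+1 <= M')%MS.
have exP : exists j, P j.
  exists K.-1; rewrite /P prednK //; apply: contra WM' => h; apply: submx_trans h.
  by rewrite sub_capmx submx_refl WK.
case: (ex_minnP exP) => d Pd dmin.
have low j : (j <= d)%N -> (W :&: S j <= M')%MS.
  case: j => [|j] jd; first exact: submx_trans (capmxSr _ _) S0.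
  apply: contraTT jd => /dmin; rewrite -ltnNge ltnS //.
have /row_subPn [i zn] := Pd.
set z := row i (W :&: S d.+1)%MS.
have zW : (z <= W)%MS := submx_trans (row_sub _ _) (capmxSl _ _).
have zS : (z <= S d.+1)%MS := submx_trans (row_sub _ _) (capmxSr _ _).
move: zS; rewrite SS => /sub_addsmxP [[u1 u2] /= zE].
have [c cE] : exists c, u2 *m <<w *m A ^+ d>>%MS = c *: (w *m A ^+ d).
  by apply/sub_rVP; apply: submx_trans (submxMl _ _) _; rewrite genmxE.
rewrite cE in zE.
have c0 : c != 0.
  apply: contra zn => /eqP c0.
  have zz : z = u1 *m S d by rewrite zE c0 scale0r addr0.
  apply: submx_trans (low d (leqnn d)); rewrite sub_capmx zW /=.
  by move: zz; rewrite /z => ->; exact: submxMl.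
have main j : (W :&: S j <= (W :&: M') + cyc z)%MS.
  elim: j => [|j IH].
    by apply: submx_trans (addsmxSl _ _); rewrite sub_capmx capmxSl; exact: low 0%N _.
  case: (leqP j.+1 d) => [jd|dj].
    by apply: submx_trans (addsmxSl _ _); rewrite sub_capmx capmxSl; exact: low.
  apply/rV_subP => y; rewrite sub_capmx => /andP [yW].
  rewrite SS => /sub_addsmxP [[v1 v2] /= yE].
  have [c' c'E] : exists c', v2 *m <<w *m A ^+ j>>%MS = c' *: (w *m A ^+ j).
    by apply/sub_rVP; apply: submx_trans (submxMl _ _) _; rewrite genmxE.
  rewrite c'E in yE.
  have je : (d + (j - d) = j)%N by rewrite subnKC // -ltnS.
  set e := (j - d)%N in je *.
  set q := c' / c.
  have yD : y = (y - q *: (z *m A ^+ e)) + q *: (z *m A ^+ e) by rewrite subrK.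
  rewrite yD; apply: addmx_sub; last first.
    by apply: scalemx_sub; apply: submx_trans (addsmxSr _ _); exact: cyc_pow.
  apply: submx_trans IH; rewrite sub_capmx; apply/andP; split.
    apply: addmx_sub; first exact: yW.
    rewrite -scaleNr; apply: scalemx_sub.
    exact: submx_trans (submxMr _ zW) (powA _ WA).
  have -> : y - q *: (z *m A ^+ e) = v1 *m S j - q *: (u1 *m S d *m A ^+ e).
    have wE : w *m A ^+ d *m A ^+ e = w *m A ^+ j.
      by rewrite -mulmxA -[A ^+ d *m A ^+ e]/(A ^+ d * A ^+ e) -exprD je.
    rewrite yE zE mulmxDl -scalemxAl wE scalerDr scalerA /q divfK //.
    by rewrite opprD addrACA subrr addr0.
  apply: addmx_sub; first exact: submxMl.
  rewrite -scaleNr; apply: scalemx_sub; rewrite -je.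
  exact: submx_trans (submxMr _ (submxMl _ _)) (SA _ _).
exists z => //.
by apply: submx_trans (main K); rewrite sub_capmx submx_refl WK.
Qed.

Lemma genS_sub (s : seq 'rV[F]_N) m (W : 'M[F]_(m, N)) :
  (W *m A <= W)%MS -> (W <= genS s)%MS ->
  exists t : seq 'rV[F]_N,
    [/\ size t = size s, all (fun v => v <= W)%MS t & (W <= genS t)%MS].
Proof.
elim: s m W => [|w s IH] m W WA WS.
  by exists [::]; split.
have MA : (genS s *m A <= genS s)%MS.
  elim: (s) => [|x r IHr]; first by rewrite /genS big_nil mul0mx.
  rewrite /genS big_cons addsmxMr; apply: addsmxS; first exact: cycA.
  exact: IHr.
have W'A : ((W :&: genS s) *m A <= W :&: genS s)%MS.
  apply: submx_trans (capmxMr _ _ _) _; rewrite sub_capmx; apply/andP; split.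
    exact: submx_trans (capmxSl _ _) WA.
  exact: submx_trans (capmxSr _ _) MA.
have [t' [st' allt' W't']] := IH _ _ W'A (capmxSr _ _).
have WS' : (W <= genS s + cyc w)%MS by move: WS; rewrite /genS big_cons addsmxC.
have [z zW Wz] := step MA WA WS'.
exists (z :: t'); split => /=; first by rewrite st'.
  rewrite zW /=; apply/allP => v /(allP allt') vW.
  exact: submx_trans vW (capmxSl _ _).
rewrite /genS big_cons addsmxC; apply: submx_trans Wz _.
by apply: addsmxS.
Qed.

Lemma cyc_in_genS w s : w \in s -> (cyc w <= genS s)%MS.
Proof.
elim: s => [|y s IH] //; rewrite inE /genS big_cons => /orP [/eqP ->|ws].
  exact: addsmxSl.
exact: submx_trans (IH ws) (addsmxSr _ _).
Qed.

Lemma genS_subP s m (B : 'M[F]_(m, N)) :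
  (forall w, w \in s -> (cyc w <= B)%MS) -> (genS s <= B)%MS.
Proof.
elim: s => [|y s IH] h; first by rewrite /genS big_nil sub0mx.
rewrite /genS big_cons addsmx_sub h ?mem_head //=.
by apply: IH => w ws; apply: h; rewrite inE ws orbT.
Qed.

End LA.

Section Ind.
Variables (F : fieldType) (gT : finGroupType) (H H1 : {group gT}) (a : nat).
Variable rV : mx_representation F H1 a.
Hypothesis sH1H : H1 \subset H.

Local Notation n := (ind_deg H H1).
Local Notation t := (@ind_rep gT H H1).
Local Notation X := (ind_trans H H1).
Local Notation act := (@ind_act F gT H H1 a rV).
Local Notation imx := (@ind_mx F gT H H1 a rV).

Let part : partition (rcosets H1 H) H := rcosets_partition sH1H.
Let trX : is_transversal X (rcosets H1 H) H := transversalP part.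

Lemma t_in i : t i \in X.
Proof. exact: enum_valP. Qed.

Lemma X_H y : y \in X -> y \in H.
Proof. by move=> yX; apply: (subsetP (transversal_sub trX)). Qed.

Lemma t_H i : t i \in H.
Proof. exact/X_H/t_in. Qed.

Lemma pblockX y : y \in H -> pblock (rcosets H1 H) y = (H1 :* y)%g.
Proof.
move=> yH; apply: def_pblock; first by case/and3P: part.
  by rewrite mem_rcosets mulSGid.
by rewrite rcoset_refl.
Qed.

Lemma X_uniq y z : y \in X -> z \in X -> y \in (H1 :* z)%g -> y = z.
Proof.
move=> yX zX /rcoset_eqP e.
by rewrite -(pblockK trX 1%g yX) -(pblockK trX 1%g zX) !pblockX ?X_H // e.
Qed.

Lemma X_ex y : y \in H -> exists i, y \in (H1 :* t i)%g.
Proof.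
move=> yH.
have PB : (H1 :* y)%g \in rcosets H1 H by rewrite mem_rcosets mulSGid.
set z := transversal_repr 1%g X (H1 :* y)%g.
have zX : z \in X := repr_mem_transversal trX 1%g PB.
have zB : z \in (H1 :* y)%g := repr_mem_pblock trX 1%g PB.
exists (enum_rank_in zX z); rewrite /ind_rep enum_rankK_in //.
by rewrite rcoset_sym.
Qed.

Definition R x i j := (t i * x * (t j)^-1 \in H1)%g.

Lemma R_uniq x i j j' : R x i j -> R x i j' -> j = j'.
Proof.
rewrite /R -!mem_rcoset => h1 h2; apply: enum_val_inj.
apply: X_uniq; try exact: t_in.
by rewrite -(rcoset_transl _ h1).
Qed.

Lemma R_ex x i : x \in H -> exists j, R x i j.
Proof.
move=> xH; have [j hj] := X_ex (groupM (t_H i) xH).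
by exists j; rewrite /R -mem_rcoset.
Qed.


Lemma row_act g M j : row j (act g M) =
  \sum_i (if R g i j then row i M *m rV (t i * g * (t j)^-1)%g else 0).
Proof. by rewrite /ind_act rowK. Qed.

Fact ind_act_semilinear g : semilinear (act g).
Proof.
split=> [c M | M1 M2]; apply/row_matrixP => j; rewrite ?linearZ ?linearD /= !row_act.
  rewrite scaler_sumr; apply: eq_bigr => i _; case: ifP => _; rewrite ?scaler0 //.
  by rewrite linearZ /= scalemxAl.
rewrite -big_split; apply: eq_bigr => i _ /=; case: ifP => _; rewrite ?addr0 //.
by rewrite linearD mulmxDl.
Qed.

HB.instance Definition _ g :=
  GRing.isSemilinear.Build F 'M[F]_(n, a) 'M[F]_(n, a) _ (act g)
    (ind_act_semilinear g).

Lemma ind_mxE g M : mxvec M *m imx g = mxvec (act g M).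
Proof. exact: mul_vec_lin. Qed.


Lemma act_mul x y M : x \in H -> y \in H -> act (x * y)%g M = act y (act x M).
Proof.
move=> xH yH; apply/row_matrixP => j.
rewrite !row_act.
rewrite [RHS](eq_bigr (fun l => \sum_i (if R x i l && R y l j then
   row i M *m rV (t i * x * (t l)^-1)%g *m rV (t l * y * (t j)^-1)%g else 0))); last first.
  move=> l _; rewrite row_act; case: ifP => Ry; last by rewrite big1 // => i _; rewrite andbF.
  rewrite mulmx_suml; apply: eq_bigr => i _; rewrite andbT; case: ifP => _ //.
  by rewrite mul0mx.
rewrite exchange_big; apply: eq_bigr => i _ /=.
have [l Rl] := R_ex i xH.
rewrite (bigD1 l) //= big1 ?addr0; last first.
  move=> l' nl; case: ifP => // /andP [Rl' _]; case/eqP: nl.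
  exact: R_uniq Rl' Rl.
rewrite Rl /=.
have E : (t i * (x * y) * (t j)^-1 = (t i * x * (t l)^-1) * (t l * y * (t j)^-1))%g.
  by rewrite !mulgA mulgKV.
move: Rl; rewrite /R E => hx.
rewrite (groupMl _ hx); case: ifP => // hy.
by rewrite repr_mxM // mulmxA.
Qed.

Lemma act1 M : act 1%g M = M.
Proof.
apply/row_matrixP => j; rewrite row_act (bigD1 j) //= big1 ?addr0.
  by rewrite /R mulg1 mulgV group1 repr_mx1 mulmx1.
move=> i nij; case: ifP => // Rij.
have Rii : R 1%g i i by rewrite /R mulg1 mulgV group1.
by case/eqP: nij; exact: R_uniq Rii Rij.
Qed.

Lemma imxM x y : x \in H -> y \in H -> imx (x * y)%g = imx x *m imx y.
Proof.
move=> xH yH; apply/row_matrixP => k.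
by rewrite !rowE -[delta_mx 0 k]vec_mxK mulmxA !ind_mxE act_mul.
Qed.

Lemma imx1 : imx 1%g = 1.
Proof.
apply/row_matrixP => k.
by rewrite !rowE -[delta_mx 0 k]vec_mxK ind_mxE act1 mulmx1.
Qed.

Lemma imxX x k : x \in H -> imx (x ^+ k)%g = imx x ^+ k.
Proof.
move=> xH; elim: k => [|k IH]; first by rewrite expg0 imx1 expr0.
by rewrite expgS imxM ?groupX // IH exprS.
Qed.

Definition mkrow (i : 'I_n) (v : 'rV[F]_a) : 'M[F]_(n, a) :=
  \matrix_(k < n) (if k == i then v else 0).

Lemma row_mkrow i v k : row k (mkrow i v) = if k == i then v else 0.
Proof. by rewrite rowK. Qed.

Lemma act_mkrow g i j v : R g i j ->
  act g (mkrow i v) = mkrow j (v *m rV (t i * g * (t j)^-1)%g).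
Proof.
move=> Rij; apply/row_matrixP => k; rewrite row_act (bigD1 i) //= big1 ?addr0.
  rewrite !row_mkrow eqxx; case: eqP => [->|nkj]; first by rewrite Rij.
  by case: ifP => // Rik; case: nkj; exact: R_uniq Rik Rij.
by move=> i' ni; rewrite row_mkrow (negbTE ni) mul0mx; case: ifP.
Qed.

Lemma mkrow_sum M : M = \sum_(j < n) mkrow j (row j M).
Proof.
apply/row_matrixP => k; rewrite linear_sum /=.
rewrite (bigD1 k) //= big1 ?addr0; first by rewrite row_mkrow eqxx.
by move=> j nj; rewrite row_mkrow eq_sym (negbTE nj).
Qed.

Lemma mkrow_delta i v : mkrow i v = \sum_(l < a) v 0 l *: mkrow i (delta_mx 0 l).
Proof.
apply/row_matrixP => k; rewrite linear_sum /=.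
rewrite row_mkrow (eq_bigr (fun l => v 0 l *: (if k == i then delta_mx 0 l else 0))); last first.
  by move=> l _; rewrite linearZ /= row_mkrow.
case: (k == i); first by rewrite -row_sum_delta.
by rewrite big1 // => l _; rewrite scaler0.
Qed.

Definition bas c := [seq mxvec (mkrow c (delta_mx 0 l)) | l <- enum 'I_a].

Lemma gen_all x c0 c1 : x \in H ->
  (forall j, exists2 c, c \in [:: c0; c1] & exists k, R (x ^+ k)%g c j) ->
  forall u : 'rV[F]_(n * a), (u <= genS (order x) (imx x) (bas c0 ++ bas c1))%MS.
Proof.
move=> xH orb u.
have Kx : (0 < (order x))%N := order_gt0 x.
have AK : imx x ^+ (order x) = 1 by rewrite -imxX // expg_order imx1.
rewrite -[u]vec_mxK (mkrow_sum (vec_mx u)) linear_sum /=.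
apply: summx_sub => j _.
have [c cin [k Rk]] := orb j.
set M := vec_mx u.
have hH : (t c * x ^+ k * (t j)^-1)%g \in H1 := Rk.
set w' := row j M *m invmx (rV (t c * x ^+ k * (t j)^-1)%g).
have -> : mkrow j (row j M) = act (x ^+ k)%g (mkrow c w').
  by rewrite (act_mkrow _ Rk) /w' mulmxKV // repr_mx_unit.
rewrite -ind_mxE imxX // (mkrow_delta c w') linear_sum /= mulmx_suml.
apply: summx_sub => l _; rewrite linearZ /= -scalemxAl; apply: scalemx_sub.
apply: submx_trans (cyc_pow Kx AK _ _) (cyc_in_genS _ _ _).
rewrite mem_cat; move: cin; rewrite !inE => /orP [] /eqP ->.
  by rewrite /bas (map_f (fun l => mxvec (mkrow _ (delta_mx 0 l)))) ?mem_enum.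
by rewrite orbC /bas (map_f (fun l => mxvec (mkrow _ (delta_mx 0 l)))) ?mem_enum.
Qed.

End Ind.

From mathcomp Require Import zify.

Section Cycle.
Variables (T : finType) (e : seq T) (d : T) (P : {set T}).
Hypotheses (ue : uniq e) (eP : {subset e <= P}).
Local Notation x i := (nth d e i).

Lemma cyc_perm_gen n : (n < size e)%N -> exists s : {perm T},
  [/\ perm_on P s, odd_perm s = odd n,
      forall i, (i < n)%N -> s (x i) = x i.+1,
      s (x n) = x 0 & forall j, (n < j < size e)%N -> s (x j) = x j].
Proof.
have xne i j : (i < size e)%N -> (j < size e)%N -> i != j -> x i != x j.
  by move=> hi hj; rewrite nth_uniq.
elim: n => [|n IH] hn.
  exists 1%g; split => //; first exact: perm_on1; first exact: odd_perm1.
    by rewrite perm1.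
  by move=> j _; rewrite perm1.
have [s [sP so sa sb sc]] := IH (ltnW hn).
have n0 : x 0 != x n.+1 by apply: xne => //; lia.
exists (s * tperm (x 0) (x n.+1))%g; split.
- apply: perm_onM sP _; apply: subset_trans (tperm_on _ _) _.
  rewrite subUset !sub1set; apply/andP; split; apply: eP; apply: mem_nth; [exact: leq_ltn_trans (leq0n _) hn | exact: hn].
- by rewrite odd_permM so odd_tperm n0 /= addbT.
- move=> i hi; rewrite permM; case: (ltnP i n) => [lin | gin].
    rewrite sa // tpermD //; apply: xne; lia.
  have -> : i = n by lia.
  by rewrite sb tpermL.
- by rewrite permM sc ?tpermR //; apply/andP; split; lia.
- move=> j /andP [hj1 hj2]; rewrite permM sc; last by apply/andP; split; lia.
  by rewrite tpermD //; apply: xne; lia.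
Qed.

Lemma cyc_perm n : (n < size e)%N -> exists s : {perm T},
  [/\ perm_on P s, odd_perm s = odd n &
      forall m, (m <= n)%N -> (s ^+ m)%g (x 0) = x m].
Proof.
move=> hn; have [s [sP so sa _ _]] := cyc_perm_gen hn.
exists s; split => // m; elim: m => [|m IH] hm; first by rewrite expg0 perm1.
by rewrite expgSr permM IH ?sa //; lia.
Qed.

End Cycle.

Section Orb.
Variables (gT : finGroupType) (H H1 : {group gT}).
Hypothesis sH1H : H1 \subset H.
Local Notation n := (ind_deg H H1).
Local Notation t := (@ind_rep gT H H1).
Local Notation P := (rcosets H1 H).

Lemma P_closed C z : C \in P -> z \in H -> (C :* z)%g \in P.
Proof.
case/rcosetsP => w wH ->; rewrite -rcosetM mem_rcosets mulSGid //.
exact: groupM.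
Qed.

Lemma P_idx C : C \in P -> exists c : 'I_n, C = (H1 :* t c)%g.
Proof.
case/rcosetsP => w wH ->; have [c hc] := X_ex sH1H wH.
by exists c; apply/rcoset_eqP.
Qed.

Lemma Rcos c j z : (H1 :* (t c * z))%g = (H1 :* t j)%g -> R z c j.
Proof. by move=> E; rewrite /R -mem_rcoset -E rcoset_refl. Qed.

Lemma orbit_ex : (2 <= #|H : H1|%g)%N ->
  (coset_perm_image H H1 = coset_Alt H H1 \/ coset_perm_image H H1 = coset_Sym H H1) ->
  exists2 y, y \in H & exists c0 c1 : 'I_n,
    forall j, exists2 c, c \in [:: c0; c1] & exists k, R (y ^+ k)%g c j.
Proof.
move=> u2 hU.
set e := enum P.
have ue : uniq e := enum_uniq _.
have eP : {subset e <= P} by move=> C; rewrite mem_enum.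
have se : size e = #|H : H1|%g by rewrite -cardE.
set u := size e in se.
pose N := if odd u then u.-1 else u.-2.
have hN : (N < u)%N by rewrite /N; case: ifP; lia.
have oN : odd N = false.
  rewrite /N; case: ifP => ou.
    rewrite -subn1 oddB ?ou //; lia.
  rewrite -subn2 oddB ?ou //; lia.
have [s [sP so sm]] := cyc_perm set0 ue eP hN.
have sAlt : s \in coset_Alt H H1 by rewrite !inE sP so oN.
have sIm : s \in coset_perm_image H H1.
  case: hU => ->; first done.
  by move: sAlt; rewrite !inE => /andP [].
case/imsetP: sIm => y yH sE.
have sC C : C \in P -> s C = (C :* y)%g.
  move=> CP; rewrite sE restr_permE //=; first by rewrite actpermE /= rcosetE.
  apply/astabsP => D /=; rewrite apermE actpermE /= rcosetE.
  apply/idP/idP => h; last exact: P_closed.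
  by have := P_closed h (groupVr yH); rewrite rcosetK.
have sX C m : C \in P -> (s ^+ m)%g C = (C :* y ^+ m)%g.
  move=> CP; elim: m => [|m IH]; first by rewrite expg0 perm1 rcoset1.
  by rewrite expgSr permM IH sC ?P_closed ?groupX // expgSr rcosetM.
have x0P : nth set0 e 0 \in P.
  by apply: eP; apply: mem_nth; apply: (@leq_trans u); [lia | exact: leqnn].
have xuP : nth set0 e u.-1 \in P.
  by apply: eP; apply: mem_nth; apply: (@leq_trans u); [lia | exact: leqnn].
have [c0 E0] := P_idx x0P.
have [c1 E1] := P_idx xuP.
exists y => //; exists c0, c1 => j.
set C := (H1 :* t j)%g.
have CP : C \in P by rewrite mem_rcosets mulSGid // (t_H sH1H).
have Ce : C \in e by rewrite mem_enum.
set m := index C e.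
have hm : (m < u)%N by rewrite index_mem.
have Cm : nth set0 e m = C := nth_index _ Ce.
case: (leqP m N) => mN.
  exists c0; first by rewrite mem_head.
  exists m; apply: Rcos.
  by rewrite rcosetM -E0 -sX // sm // Cm.
exists c1; first by rewrite !inE eqxx orbT.
exists 0%N; apply: Rcos.
have mu : m = u.-1 by move: mN; rewrite /N; case: ifP => _ ?; lia.
by rewrite mu in Cm; rewrite expg0 mulg1 -E1 Cm.
Qed.

End Orb.

Lemma prop_aux (F : fieldType) (p : nat) (charF : (p \in [pchar F])%R)
    (gT : finGroupType) (H H1 : {group gT}) (sH1H : H1 \subset H)
    (u_ge2 : (2 <= #|H : H1|%g)%N) (a : nat) (rV : mx_representation F H1 a)
    (hU : coset_perm_image H H1 = coset_Alt H H1 \/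
          coset_perm_image H H1 = coset_Sym H H1)
    (m : nat) (W : 'M[F]_(m, (ind_deg H H1 * a)%N)) (hW : ind_submod rV W) :
  exists v : 'I_(2 * a)%N -> 'rV[F]_((ind_deg H H1 * a)%N),
    (ind_gen rV v :=: W)%MS.
Proof.
have [y yH [c0 [c1 orb]]] := orbit_ex sH1H u_ge2 hU.
set A := @ind_mx F gT H H1 a rV y.
have Kx : (0 < order y)%N := order_gt0 y.
have AK : A ^+ order y = 1 by rewrite -(imxX rV sH1H) // expg_order (imx1 rV sH1H).
have WA : (W *m A <= W)%MS := hW y yH.
have WS : (W <= genS (order y) A (bas F a c0 ++ bas F a c1))%MS.
  by apply/row_subP => r; exact: (gen_all rV sH1H yH orb).
have [tl [stl allt Wt]] := genS_sub Kx AK WA WS.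
have sz : size tl = (2 * a)%N.
  by rewrite stl size_cat /bas !size_map -!enumT !size_enum_ord mul2n addnn.
exists (fun i => nth 0 tl i).
apply/eqmxP; rewrite /ind_gen; apply/andP; split.
  apply/sumsmx_subP => i _; apply/sumsmx_subP => z zH; rewrite genmxE.
  apply: submx_trans (hW z zH); apply: submxMr; apply: (allP allt).
  by apply: mem_nth; rewrite sz.
apply: submx_trans Wt _; apply: genS_subP => w wt.
have hi : (index w tl < 2 * a)%N by rewrite -sz index_mem.
apply/sumsmx_subP => k _; rewrite genmxE -(imxX rV sH1H) //.
apply: (sumsmx_sup (Ordinal hi)) => //.
apply: (sumsmx_sup (y ^+ k)%g); first exact: groupX.
by rewrite genmxE /= nth_index.
Qed.

Local Close Scope ring_scope.

Theorem proposition2p2 (F : fieldType) (p : nat) (charF : (p \in [pchar F])%R)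
    (gT : finGroupType) (H H1 : {group gT}) (sH1H : H1 \subset H)
    (u_ge2 : (2 <= #|H : H1|%g)%N) (a : nat) (rV : mx_representation F H1 a)
    (hU : coset_perm_image H H1 = coset_Alt H H1 \/
          coset_perm_image H H1 = coset_Sym H H1)
    (m : nat) (W : 'M[F]_(m, ind_deg H H1 * a)) (hW : ind_submod rV W) :
  exists v : 'I_(2 * a) -> 'rV[F]_(ind_deg H H1 * a),
    (ind_gen rV v :=: W)%MS.
Proof. exact: (@prop_aux F p charF gT H H1 sH1H u_ge2 a rV hU m W hW). Qed.
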